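(* There exists a finite graph $G$ which is $P_{6}$-induced-saturated.
   Context: $P_n$ denotes the path on $n$ vertices. A (simple) graph $G$ is called $H$-induced-saturated if (i) $G$ does not contain an induced subgraph isomorphic to $H$; (ii) for every edge $e\in E(G)$, the graph $G-e$ obtained by deleting $e$ contains an induced subgraph isomorphic to $H$; and (iii) for every pair $\{x,y\}$ of distinct non-adjacent vertices of $G$, the graph $G+xy$ obtained by adding the edge $xy$ contains an induced subgraph isomorphic to $H$. *)

(* Defs.v *)
From mathcomp Require Import all_boot.
Set Implicit Arguments. Unset Strict Implicit. Unset Printing Implicit Defensive.

Definition simple_graph (T : finType) (e : rel T) : Prop :=
  irreflexive e /\ symmetric e.

Definition path_graph (n : nat) : rel 'I_n :=
  fun i j => (i.+1 == j :> nat) || (j.+1 == i :> nat).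

Definition has_induced (k : nat) (h : rel 'I_k) (T : finType) (e : rel T) : Prop :=
  exists f : 'I_k -> T, injective f /\ forall i j, e (f i) (f j) = h i j.

Definition del_edge (T : finType) (e : rel T) (x y : T) : rel T :=
  fun u v => e u v && ~~ (((u == x) && (v == y)) || ((u == y) && (v == x))).

Definition add_edge (T : finType) (e : rel T) (x y : T) : rel T :=
  fun u v => [|| e u v, (u == x) && (v == y) | (u == y) && (v == x)].

Definition induced_saturated (k : nat) (h : rel 'I_k) (T : finType) (e : rel T) : Prop :=
  [/\ ~ has_induced h e,
      (forall x y, e x y -> has_induced h (del_edge e x y)) &
      (forall x y, x != y -> ~~ e x y -> has_induced h (add_edge e x y))].
Arguments path_graph n : clear implicits.

(* Main.v *)
Require Import Defs.
From mathcomp Require Import all_boot.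

Definition SS : seq nat := [:: 1;3;4;7;9;11;13;16;17;19].
Definition TBL : seq (seq bool) := [:: [:: false; true; false; true; true; false; false; true; false; true; false; true; false; true; false; false; true; true; false; true];
 [:: true; false; true; false; true; true; false; false; true; false; true; false; true; false; true; false; false; true; true; false];
 [:: false; true; false; true; false; true; true; false; false; true; false; true; false; true; false; true; false; false; true; true];
 [:: true; false; true; false; true; false; true; true; false; false; true; false; true; false; true; false; true; false; false; true];
 [:: true; true; false; true; false; true; false; true; true; false; false; true; false; true; false; true; false; true; false; false];
 [:: false; true; true; false; true; false; true; false; true; true; false; false; true; false; true; false; true; false; true; false];
 [:: false; false; true; true; false; true; false; true; false; true; true; false; false; true; false; true; false; true; false; true];
 [:: true; false; false; true; true; false; true; false; true; false; true; true; false; false; true; false; true; false; true; false];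
 [:: false; true; false; false; true; true; false; true; false; true; false; true; true; false; false; true; false; true; false; true];
 [:: true; false; true; false; false; true; true; false; true; false; true; false; true; true; false; false; true; false; true; false];
 [:: false; true; false; true; false; false; true; true; false; true; false; true; false; true; true; false; false; true; false; true];
 [:: true; false; true; false; true; false; false; true; true; false; true; false; true; false; true; true; false; false; true; false];
 [:: false; true; false; true; false; true; false; false; true; true; false; true; false; true; false; true; true; false; false; true];
 [:: true; false; true; false; true; false; true; false; false; true; true; false; true; false; true; false; true; true; false; false];
 [:: false; true; false; true; false; true; false; true; false; false; true; true; false; true; false; true; false; true; true; false];
 [:: false; false; true; false; true; false; true; false; true; false; false; true; true; false; true; false; true; false; true; true];
 [:: true; false; false; true; false; true; false; true; false; true; false; false; true; true; false; true; false; true; false; true];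
 [:: true; true; false; false; true; false; true; false; true; false; true; false; false; true; true; false; true; false; true; false];
 [:: false; true; true; false; false; true; false; true; false; true; false; true; false; false; true; true; false; true; false; true];
 [:: true; false; true; true; false; false; true; false; true; false; true; false; true; false; false; true; true; false; true; false]].
Definition E (i j : nat) : bool := nth false (nth [::] TBL i) j.
Definition eG : rel 'I_20 := fun i j => E i j.
Definition V := iota 0 20.

Definition toI (a : nat) : 'I_20 := Ordinal (ltn_pmod a (isT : 0 < 20)).
Lemma toIK (x : 'I_20) : toI x = x.
Proof. by apply: val_inj; rewrite /= modn_small. Qed.
Lemma toI_val a : a < 20 -> nat_of_ord (toI a) = a.
Proof. by move=> h; rewrite /= modn_small. Qed.

Definition gn (R : rel 'I_20) (a b : nat) : bool := R (toI a) (toI b).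

Fixpoint fs (f : nat -> option (seq nat)) (l : seq nat) : option (seq nat) :=
  match l with [::] => None | x :: l' =>
    match f x with Some r => Some r | None => fs f l' end end.

Fixpoint ext (g : nat -> nat -> bool) (k : nat) (p : seq nat) : option (seq nat) :=
  match k with 0 => Some (rev p) | k'.+1 =>
    match p with [::] => None | l :: rest =>
      fs (fun v => ext g k' (v :: p))
        [seq v <- V | g l v && (v \notin p) && all (fun u => ~~ g u v) rest]
    end end.

Definition WT : seq (seq (seq nat)) := [:: [:: [:: ]; [:: 0; 3; 6; 15; 8; 1]; [:: 4; 0; 2; 6; 10; 14]; [:: 0; 1; 8; 15; 6; 3]; [:: 0; 9; 10; 14; 15; 4]; [:: 10; 3; 0; 5; 8; 15]; [:: 2; 6; 0; 4; 8; 12]; [:: 0; 1; 12; 15; 6; 7]; [:: 10; 3; 0; 8; 5; 18]; [:: 0; 1; 14; 15; 6; 9]; [:: 2; 6; 10; 0; 4; 8]; [:: 0; 1; 5; 6; 15; 11]; [:: 2; 5; 12; 0; 7; 10]; [:: 0; 1; 8; 15; 6; 13]; [:: 2; 6; 10; 14; 0; 4]; [:: 5; 2; 15; 0; 7; 10]; [:: 0; 1; 10; 6; 15; 16]; [:: 0; 3; 2; 5; 8; 17]; [:: 2; 18; 0; 4; 8; 12]; [:: 0; 4; 5; 2; 19; 10]];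
 [:: [:: 0; 3; 6; 15; 8; 1]; [:: ]; [:: 1; 4; 7; 16; 9; 2]; [:: 5; 1; 3; 7; 11; 15]; [:: 1; 2; 9; 16; 7; 4]; [:: 1; 0; 11; 15; 6; 5]; [:: 11; 4; 1; 6; 9; 16]; [:: 3; 7; 1; 5; 9; 13]; [:: 0; 1; 10; 6; 15; 8]; [:: 11; 4; 1; 9; 6; 19]; [:: 0; 1; 8; 15; 6; 10]; [:: 3; 7; 11; 1; 5; 9]; [:: 0; 1; 10; 6; 15; 12]; [:: 3; 6; 13; 1; 8; 11]; [:: 1; 0; 9; 6; 15; 14]; [:: 3; 7; 11; 15; 1; 5]; [:: 6; 3; 16; 1; 8; 11]; [:: 1; 2; 11; 7; 16; 17]; [:: 0; 1; 10; 6; 15; 18]; [:: 3; 19; 1; 5; 9; 13]];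
 [:: [:: 4; 0; 2; 6; 10; 14]; [:: 1; 4; 7; 16; 9; 2]; [:: ]; [:: 2; 5; 8; 17; 0; 3]; [:: 0; 4; 2; 6; 10; 14]; [:: 0; 3; 2; 15; 8; 5]; [:: 2; 1; 12; 16; 7; 6]; [:: 12; 5; 2; 7; 0; 17]; [:: 0; 4; 8; 2; 6; 10]; [:: 0; 9; 10; 14; 15; 2]; [:: 0; 7; 10; 2; 5; 12]; [:: 1; 2; 9; 16; 7; 11]; [:: 0; 4; 8; 12; 2; 6]; [:: 1; 2; 11; 7; 16; 13]; [:: 4; 7; 14; 2; 9; 12]; [:: 0; 3; 2; 5; 8; 15]; [:: 0; 16; 2; 6; 10; 14]; [:: 7; 0; 17; 2; 5; 12]; [:: 2; 3; 12; 8; 17; 18]; [:: 0; 19; 10; 14; 5; 2]];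
 [:: [:: 0; 1; 8; 15; 6; 3]; [:: 5; 1; 3; 7; 11; 15]; [:: 2; 5; 8; 17; 0; 3]; [:: ]; [:: 3; 6; 9; 18; 1; 4]; [:: 1; 5; 3; 7; 11; 15]; [:: 0; 3; 10; 6; 5; 8]; [:: 3; 2; 13; 17; 8; 7]; [:: 13; 0; 3; 8; 5; 18]; [:: 1; 5; 9; 3; 7; 11]; [:: 1; 10; 11; 15; 16; 3]; [:: 1; 8; 11; 3; 6; 13]; [:: 2; 3; 0; 17; 8; 12]; [:: 1; 5; 9; 13; 3; 7]; [:: 0; 3; 10; 14; 5; 8]; [:: 5; 8; 15; 3; 0; 13]; [:: 1; 4; 3; 6; 9; 16]; [:: 1; 17; 3; 7; 11; 15]; [:: 8; 1; 18; 3; 6; 13]; [:: 3; 4; 13; 9; 18; 19]];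
 [:: [:: 0; 9; 10; 14; 15; 4]; [:: 1; 2; 9; 16; 7; 4]; [:: 0; 4; 2; 6; 10; 14]; [:: 3; 6; 9; 18; 1; 4]; [:: ]; [:: 0; 4; 8; 5; 6; 10]; [:: 0; 4; 6; 2; 18; 14]; [:: 1; 4; 11; 7; 6; 9]; [:: 4; 3; 14; 18; 9; 8]; [:: 14; 1; 4; 9; 6; 19]; [:: 0; 4; 10; 6; 2; 18]; [:: 2; 11; 12; 16; 17; 4]; [:: 2; 9; 12; 4; 7; 14]; [:: 3; 4; 1; 18; 9; 13]; [:: 0; 4; 14; 10; 6; 2]; [:: 0; 4; 8; 15; 6; 10]; [:: 6; 9; 16; 4; 1; 14]; [:: 2; 5; 4; 0; 17; 10]; [:: 0; 4; 18; 2; 6; 10]; [:: 9; 2; 19; 4; 7; 14]];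
 [:: [:: 10; 3; 0; 5; 8; 15]; [:: 1; 0; 11; 15; 6; 5]; [:: 0; 3; 2; 15; 8; 5]; [:: 1; 5; 3; 7; 11; 15]; [:: 0; 4; 8; 5; 6; 10]; [:: ]; [:: 0; 3; 6; 15; 8; 5]; [:: 1; 5; 7; 3; 19; 15]; [:: 0; 7; 8; 12; 5; 2]; [:: 5; 4; 15; 19; 10; 9]; [:: 0; 3; 10; 5; 8; 15]; [:: 1; 5; 11; 7; 3; 19]; [:: 0; 3; 12; 8; 5; 18]; [:: 3; 0; 13; 5; 8; 15]; [:: 0; 3; 14; 15; 8; 5]; [:: 1; 5; 15; 11; 7; 3]; [:: 0; 16; 12; 5; 6; 10]; [:: 7; 0; 17; 5; 2; 15]; [:: 0; 7; 18; 2; 5; 12]; [:: 1; 5; 19; 3; 7; 11]];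
 [:: [:: 2; 6; 0; 4; 8; 12]; [:: 11; 4; 1; 6; 9; 16]; [:: 2; 1; 12; 16; 7; 6]; [:: 0; 3; 10; 6; 5; 8]; [:: 0; 4; 6; 2; 18; 14]; [:: 0; 3; 6; 15; 8; 5]; [:: ]; [:: 0; 7; 10; 6; 5; 12]; [:: 0; 4; 8; 6; 2; 18]; [:: 1; 8; 9; 13; 6; 3]; [:: 6; 5; 16; 0; 11; 10]; [:: 1; 4; 11; 6; 9; 16]; [:: 0; 4; 8; 12; 6; 2]; [:: 0; 13; 10; 6; 5; 8]; [:: 4; 1; 14; 6; 9; 16]; [:: 0; 3; 6; 5; 8; 15]; [:: 0; 16; 6; 2; 18; 14]; [:: 0; 17; 10; 6; 5; 12]; [:: 8; 1; 18; 6; 3; 16]; [:: 1; 8; 19; 3; 6; 13]];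
 [:: [:: 0; 1; 12; 15; 6; 7]; [:: 3; 7; 1; 5; 9; 13]; [:: 12; 5; 2; 7; 0; 17]; [:: 3; 2; 13; 17; 8; 7]; [:: 1; 4; 11; 7; 6; 9]; [:: 1; 5; 7; 3; 19; 15]; [:: 0; 7; 10; 6; 5; 12]; [:: ]; [:: 1; 8; 11; 7; 6; 13]; [:: 1; 5; 9; 7; 3; 19]; [:: 2; 9; 10; 14; 7; 4]; [:: 7; 6; 17; 1; 12; 11]; [:: 2; 5; 12; 7; 0; 17]; [:: 1; 5; 9; 13; 7; 3]; [:: 0; 7; 10; 14; 5; 2]; [:: 5; 2; 15; 7; 0; 17]; [:: 1; 4; 7; 6; 9; 16]; [:: 1; 17; 7; 3; 19; 15]; [:: 1; 18; 11; 7; 6; 13]; [:: 9; 2; 19; 7; 4; 17]];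
 [:: [:: 10; 3; 0; 8; 5; 18]; [:: 0; 1; 10; 6; 15; 8]; [:: 0; 4; 8; 2; 6; 10]; [:: 13; 0; 3; 8; 5; 18]; [:: 4; 3; 14; 18; 9; 8]; [:: 0; 7; 8; 12; 5; 2]; [:: 0; 4; 8; 6; 2; 18]; [:: 1; 8; 11; 7; 6; 13]; [:: ]; [:: 0; 9; 10; 14; 15; 8]; [:: 0; 3; 10; 8; 5; 18]; [:: 0; 11; 10; 6; 5; 8]; [:: 8; 7; 18; 2; 13; 12]; [:: 3; 0; 13; 8; 5; 18]; [:: 0; 4; 8; 14; 10; 6]; [:: 0; 7; 8; 5; 2; 15]; [:: 6; 3; 16; 8; 1; 18]; [:: 2; 5; 8; 7; 0; 17]; [:: 0; 4; 8; 18; 2; 6]; [:: 0; 19; 10; 14; 5; 8]];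
 [:: [:: 0; 1; 14; 15; 6; 9]; [:: 11; 4; 1; 9; 6; 19]; [:: 0; 9; 10; 14; 15; 2]; [:: 1; 5; 9; 3; 7; 11]; [:: 14; 1; 4; 9; 6; 19]; [:: 5; 4; 15; 19; 10; 9]; [:: 1; 8; 9; 13; 6; 3]; [:: 1; 5; 9; 7; 3; 19]; [:: 0; 9; 10; 14; 15; 8]; [:: ]; [:: 0; 9; 2; 15; 14; 10]; [:: 1; 4; 11; 9; 6; 19]; [:: 0; 9; 10; 14; 15; 12]; [:: 9; 8; 19; 3; 14; 13]; [:: 4; 1; 14; 9; 6; 19]; [:: 1; 5; 9; 15; 11; 7]; [:: 1; 8; 9; 6; 3; 16]; [:: 7; 4; 17; 9; 2; 19]; [:: 3; 0; 9; 5; 18; 15]; [:: 1; 5; 9; 19; 3; 7]];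
 [:: [:: 2; 6; 10; 0; 4; 8]; [:: 0; 1; 8; 15; 6; 10]; [:: 0; 7; 10; 2; 5; 12]; [:: 1; 10; 11; 15; 16; 3]; [:: 0; 4; 10; 6; 2; 18]; [:: 0; 3; 10; 5; 8; 15]; [:: 6; 5; 16; 0; 11; 10]; [:: 2; 9; 10; 14; 7; 4]; [:: 0; 3; 10; 8; 5; 18]; [:: 0; 9; 2; 15; 14; 10]; [:: ]; [:: 0; 11; 8; 5; 6; 10]; [:: 0; 4; 8; 12; 10; 6]; [:: 1; 10; 11; 15; 16; 13]; [:: 10; 9; 0; 4; 15; 14]; [:: 0; 3; 10; 15; 8; 5]; [:: 0; 16; 10; 6; 2; 18]; [:: 2; 9; 10; 7; 4; 17]; [:: 0; 3; 10; 18; 5; 8]; [:: 0; 19; 2; 5; 14; 10]];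
 [:: [:: 0; 1; 5; 6; 15; 11]; [:: 3; 7; 11; 1; 5; 9]; [:: 1; 2; 9; 16; 7; 11]; [:: 1; 8; 11; 3; 6; 13]; [:: 2; 11; 12; 16; 17; 4]; [:: 1; 5; 11; 7; 3; 19]; [:: 1; 4; 11; 6; 9; 16]; [:: 7; 6; 17; 1; 12; 11]; [:: 0; 11; 10; 6; 5; 8]; [:: 1; 4; 11; 9; 6; 19]; [:: 0; 11; 8; 5; 6; 10]; [:: ]; [:: 0; 11; 10; 6; 5; 12]; [:: 1; 5; 9; 13; 11; 7]; [:: 2; 11; 12; 16; 17; 14]; [:: 11; 0; 1; 5; 6; 15]; [:: 1; 4; 11; 16; 9; 6]; [:: 1; 17; 11; 7; 3; 19]; [:: 0; 11; 10; 6; 5; 18]; [:: 1; 4; 11; 19; 6; 9]];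
 [:: [:: 2; 5; 12; 0; 7; 10]; [:: 0; 1; 10; 6; 15; 12]; [:: 0; 4; 8; 12; 2; 6]; [:: 2; 3; 0; 17; 8; 12]; [:: 2; 9; 12; 4; 7; 14]; [:: 0; 3; 12; 8; 5; 18]; [:: 0; 4; 8; 12; 6; 2]; [:: 2; 5; 12; 7; 0; 17]; [:: 8; 7; 18; 2; 13; 12]; [:: 0; 9; 10; 14; 15; 12]; [:: 0; 4; 8; 12; 10; 6]; [:: 0; 11; 10; 6; 5; 12]; [:: ]; [:: 1; 12; 11; 7; 6; 13]; [:: 0; 4; 8; 12; 14; 10]; [:: 0; 3; 12; 5; 18; 15]; [:: 12; 1; 2; 6; 7; 16]; [:: 2; 5; 12; 17; 0; 7]; [:: 0; 4; 8; 12; 18; 2]; [:: 0; 19; 10; 14; 5; 12]];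
 [:: [:: 0; 1; 8; 15; 6; 13]; [:: 3; 6; 13; 1; 8; 11]; [:: 1; 2; 11; 7; 16; 13]; [:: 1; 5; 9; 13; 3; 7]; [:: 3; 4; 1; 18; 9; 13]; [:: 3; 0; 13; 5; 8; 15]; [:: 0; 13; 10; 6; 5; 8]; [:: 1; 5; 9; 13; 7; 3]; [:: 3; 0; 13; 8; 5; 18]; [:: 9; 8; 19; 3; 14; 13]; [:: 1; 10; 11; 15; 16; 13]; [:: 1; 5; 9; 13; 11; 7]; [:: 1; 12; 11; 7; 6; 13]; [:: ]; [:: 0; 13; 10; 14; 5; 8]; [:: 1; 5; 9; 13; 15; 11]; [:: 1; 4; 13; 6; 19; 16]; [:: 13; 2; 3; 7; 8; 17]; [:: 3; 0; 13; 18; 5; 8]; [:: 1; 5; 9; 13; 19; 3]];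
 [:: [:: 2; 6; 10; 14; 0; 4]; [:: 1; 0; 9; 6; 15; 14]; [:: 4; 7; 14; 2; 9; 12]; [:: 0; 3; 10; 14; 5; 8]; [:: 0; 4; 14; 10; 6; 2]; [:: 0; 3; 14; 15; 8; 5]; [:: 4; 1; 14; 6; 9; 16]; [:: 0; 7; 10; 14; 5; 2]; [:: 0; 4; 8; 14; 10; 6]; [:: 4; 1; 14; 9; 6; 19]; [:: 10; 9; 0; 4; 15; 14]; [:: 2; 11; 12; 16; 17; 14]; [:: 0; 4; 8; 12; 14; 10]; [:: 0; 13; 10; 14; 5; 8]; [:: ]; [:: 0; 3; 14; 5; 8; 15]; [:: 0; 16; 14; 10; 6; 2]; [:: 0; 17; 10; 14; 5; 2]; [:: 14; 3; 4; 8; 9; 18]; [:: 4; 1; 14; 19; 6; 9]];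
 [:: [:: 5; 2; 15; 0; 7; 10]; [:: 3; 7; 11; 15; 1; 5]; [:: 0; 3; 2; 5; 8; 15]; [:: 5; 8; 15; 3; 0; 13]; [:: 0; 4; 8; 15; 6; 10]; [:: 1; 5; 15; 11; 7; 3]; [:: 0; 3; 6; 5; 8; 15]; [:: 5; 2; 15; 7; 0; 17]; [:: 0; 7; 8; 5; 2; 15]; [:: 1; 5; 9; 15; 11; 7]; [:: 0; 3; 10; 15; 8; 5]; [:: 11; 0; 1; 5; 6; 15]; [:: 0; 3; 12; 5; 18; 15]; [:: 1; 5; 9; 13; 15; 11]; [:: 0; 3; 14; 5; 8; 15]; [:: ]; [:: 0; 16; 12; 15; 6; 10]; [:: 1; 17; 15; 11; 7; 3]; [:: 0; 7; 18; 2; 15; 12]; [:: 15; 4; 5; 9; 10; 19]];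
 [:: [:: 0; 1; 10; 6; 15; 16]; [:: 6; 3; 16; 1; 8; 11]; [:: 0; 16; 2; 6; 10; 14]; [:: 1; 4; 3; 6; 9; 16]; [:: 6; 9; 16; 4; 1; 14]; [:: 0; 16; 12; 5; 6; 10]; [:: 0; 16; 6; 2; 18; 14]; [:: 1; 4; 7; 6; 9; 16]; [:: 6; 3; 16; 8; 1; 18]; [:: 1; 8; 9; 6; 3; 16]; [:: 0; 16; 10; 6; 2; 18]; [:: 1; 4; 11; 16; 9; 6]; [:: 12; 1; 2; 6; 7; 16]; [:: 1; 4; 13; 6; 19; 16]; [:: 0; 16; 14; 10; 6; 2]; [:: 0; 16; 12; 15; 6; 10]; [:: ]; [:: 1; 17; 13; 16; 7; 11]; [:: 0; 16; 18; 2; 6; 10]; [:: 1; 8; 19; 3; 16; 13]];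
 [:: [:: 0; 3; 2; 5; 8; 17]; [:: 1; 2; 11; 7; 16; 17]; [:: 7; 0; 17; 2; 5; 12]; [:: 1; 17; 3; 7; 11; 15]; [:: 2; 5; 4; 0; 17; 10]; [:: 7; 0; 17; 5; 2; 15]; [:: 0; 17; 10; 6; 5; 12]; [:: 1; 17; 7; 3; 19; 15]; [:: 2; 5; 8; 7; 0; 17]; [:: 7; 4; 17; 9; 2; 19]; [:: 2; 9; 10; 7; 4; 17]; [:: 1; 17; 11; 7; 3; 19]; [:: 2; 5; 12; 17; 0; 7]; [:: 13; 2; 3; 7; 8; 17]; [:: 0; 17; 10; 14; 5; 2]; [:: 1; 17; 15; 11; 7; 3]; [:: 1; 17; 13; 16; 7; 11]; [:: ]; [:: 2; 18; 14; 17; 8; 12]; [:: 1; 17; 19; 3; 7; 11]];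
 [:: [:: 2; 18; 0; 4; 8; 12]; [:: 0; 1; 10; 6; 15; 18]; [:: 2; 3; 12; 8; 17; 18]; [:: 8; 1; 18; 3; 6; 13]; [:: 0; 4; 18; 2; 6; 10]; [:: 0; 7; 18; 2; 5; 12]; [:: 8; 1; 18; 6; 3; 16]; [:: 1; 18; 11; 7; 6; 13]; [:: 0; 4; 8; 18; 2; 6]; [:: 3; 0; 9; 5; 18; 15]; [:: 0; 3; 10; 18; 5; 8]; [:: 0; 11; 10; 6; 5; 18]; [:: 0; 4; 8; 12; 18; 2]; [:: 3; 0; 13; 18; 5; 8]; [:: 14; 3; 4; 8; 9; 18]; [:: 0; 7; 18; 2; 15; 12]; [:: 0; 16; 18; 2; 6; 10]; [:: 2; 18; 14; 17; 8; 12]; [:: ]; [:: 3; 19; 15; 18; 9; 13]];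
 [:: [:: 0; 4; 5; 2; 19; 10]; [:: 3; 19; 1; 5; 9; 13]; [:: 0; 19; 10; 14; 5; 2]; [:: 3; 4; 13; 9; 18; 19]; [:: 9; 2; 19; 4; 7; 14]; [:: 1; 5; 19; 3; 7; 11]; [:: 1; 8; 19; 3; 6; 13]; [:: 9; 2; 19; 7; 4; 17]; [:: 0; 19; 10; 14; 5; 8]; [:: 1; 5; 9; 19; 3; 7]; [:: 0; 19; 2; 5; 14; 10]; [:: 1; 4; 11; 19; 6; 9]; [:: 0; 19; 10; 14; 5; 12]; [:: 1; 5; 9; 13; 19; 3]; [:: 4; 1; 14; 19; 6; 9]; [:: 15; 4; 5; 9; 10; 19]; [:: 1; 8; 19; 3; 16; 13]; [:: 1; 17; 19; 3; 7; 11]; [:: 3; 19; 15; 18; 9; 13]; [:: ]]].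

Definition W (x y : nat) : seq nat := nth [::] (nth [::] WT x) y.


Definition valid (R : rel 'I_20) (s : seq nat) : bool :=
  [&& size s == 6, all (fun x => x < 20) s, uniq s &
   all (fun i => all (fun j => R (toI (nth 0 s i)) (toI (nth 0 s j))
      == (i.+1 == j) || (j.+1 == i)) (iota 0 6)) (iota 0 6)].

Definition valid_opt R o := match o with Some s => valid R s | None => false end.

Lemma valid_has R s : valid R s -> has_induced (path_graph 6) R.
Proof.
case/and4P=> /eqP Hs Hb Hu Ha.
exists (fun i : 'I_6 => toI (nth 0 s i)); split.
  move=> i j /(congr1 val) /=.
  have Hn k : k < 6 -> nth 0 s k < 20.
    by move=> hk; apply: (allP Hb); apply: mem_nth; rewrite Hs.
  rewrite !modn_small ?Hn //.
  by move/eqP; rewrite nth_uniq ?Hs // => /eqP; apply: val_inj.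
move=> i j.
have hi : (val i \in iota 0 6) by rewrite mem_iota /=.
have hj : (val j \in iota 0 6) by rewrite mem_iota /=.
by move: (allP (allP Ha _ hi) _ hj) => /eqP.
Qed.

Lemma valid_opt_has R o : valid_opt R o -> has_induced (path_graph 6) R.
Proof. by case: o => //= s; apply: valid_has. Qed.

Definition noP6 (g : nat -> nat -> bool) : bool :=
  all (fun a => all (fun b => if g a b then
  all (fun c => if g b c && ~~ g a c then
  all (fun d => if g c d && ~~ g a d && ~~ g b d then
  all (fun x => if g d x && ~~ g a x && ~~ g b x && ~~ g c x then
  all (fun y => ~~ (g x y && ~~ g a y && ~~ g b y && ~~ g c y && ~~ g d y && (y != d))) V
  else true) V else true) V else true) V else true) V) V.

Lemma allI {T : eqType} {x : T} {s} {p : pred T} : x \in s -> all p s -> p x.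
Proof. by move=> h /allP; apply. Qed.

Lemma noP6_ok R : noP6 (gn R) -> ~ has_induced (path_graph 6) R.
Proof.
move=> H [f [inj Hf]].
pose F (i : nat) := val (f (inord i)).
have HF i j : gn R (F i) (F j) = path_graph 6 (inord i) (inord j).
  by rewrite /gn /F !toIK Hf.
have HG i j : i < 6 -> j < 6 -> gn R (F i) (F j) = (i.+1 == j) || (j.+1 == i).
  by move=> hi hj; rewrite HF /path_graph !inordK.
have mV i : F i \in V by rewrite mem_iota /= add0n ltn_ord.
move: H => /(allI (mV 0)) /(allI (mV 1)).
rewrite HG //.
move=> /(allI (mV 2)); rewrite !HG //.
move=> /(allI (mV 3)); rewrite !HG //.
move=> /(allI (mV 4)); rewrite !HG //.
move=> /(allI (mV 5)); rewrite !HG //.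
have -> : (F 5 != F 3).
  apply/eqP => /val_inj /inj /(congr1 (@nat_of_ord 6)).
  by rewrite !inordK.
done.
Qed.

Lemma eG_noP6 : noP6 (gn eG).
Proof. Time vm_compute. reflexivity. Qed.

Lemma del_all : all (fun x => all (fun y => if E x y then
  valid (del_edge eG (toI x) (toI y)) (W x y) else true) V) V.
Proof. Time vm_compute. reflexivity. Qed.

Lemma add_all : all (fun x => all (fun y => if (x != y) && ~~ E x y then
  valid (add_edge eG (toI x) (toI y)) (W x y) else true) V) V.
Proof. Time vm_compute. reflexivity. Qed.

Lemma irr_all : all (fun x => ~~ E x x) V.
Proof. by vm_compute. Qed.
Lemma sym_all : all (fun x => all (fun y => E x y == E y x) V) V.
Proof. by vm_compute. Qed.

Lemma memV (x : 'I_20) : nat_of_ord x \in V.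
Proof. by rewrite mem_iota ltn_ord. Qed.

Theorem theorem1 :
  exists (n : nat) (e : rel 'I_n),
    simple_graph e /\ (exists x y, e x y) /\ induced_saturated (path_graph 6) e.
Proof.
exists 20, eG; split; [split|split].
- by move=> x; apply/negbTE; apply: (allI (memV x) irr_all).
- by move=> x y; apply/eqP; apply: (allI (memV y) (allI (memV x) sym_all)).
- by exists (toI 0), (toI 1); vm_compute.
split.
- exact: (@noP6_ok eG eG_noP6).
- move=> x y hxy; have := allI (memV y) (allI (memV x) del_all).
  rewrite /eG in hxy; rewrite hxy !toIK; exact: valid_has.
- move=> x y hne hxy; have := allI (memV y) (allI (memV x) add_all).
  rewrite /eG in hxy; rewrite hxy andbT !toIK.
  have -> : (nat_of_ord x != nat_of_ord y) = true by [].
  exact: valid_has.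
Qed.
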